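(* Let $C=(C_1,\dots,C_n)\in\mathbb{F}_p^n$ and $(d_1,\dots,d_n)\in\mathbb{F}_p^n$ be a solution of the system $$\sum_{j=1}^n M_jC_j=0,\qquad \Omega^M_j C=d_j C\ \ (j=1,\dots,n-1),\qquad d_n=0.$$ Let the index $i$ be such that $C_i\neq 0$ and $C_j=0$ for $j=1,\dots,i-1$. Then $$d_j=M_j\ (j=1,\dots,i-1),\qquad d_i=\sum_{j=i}^n M_j,\quad d_i\neq M_i,\qquad d_j=0\ (j=i+1,\dots,n),$$ $$\sum_{l=i+1}^n M_l\neq 0,\qquad C_j=-\frac{M_i}{\sum_{l=i+1}^n M_l}\,C_i\quad (j=i+1,\dots,n).$$ Conversely, if a pair $C=(C_1,\dots,C_n)$, $(d_1,\dots,d_n)\in\mathbb{F}_p^n$ satisfies, for some index $i$, the conditions $C_i\neq0$, $C_j=0$ for $j<i$, together with $d_j=M_j$ for $j<i$, $d_i=\sum_{j=i}^nM_j$, $d_i\neq M_i$, $d_j=0$ for $j>i$, $\sum_{l=i+1}^nM_l\neq0$, and $C_j=-\frac{M_i}{\sum_{l=i+1}^nM_l}C_i$ for $j>i$, then it is a solution of the system above.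
   Context: $p$ and $q$ are primes, $n$ is a positive integer with $p>n\geq 2$ and $p>q$; $(m_1,\dots,m_n)\in\mathbb{Z}_{>0}^n$ with $m_i<q$. For $i=1,\dots,n$, $M_i$ is the least positive integer with $M_i\equiv -m_i/q \pmod p$. For $j\neq l$, $\Omega^M_{jl}$ is the $n\times n$ matrix over $\mathbb{F}_p$ whose only nonzero entries are: $(j,j)$-entry $M_l$, $(j,l)$-entry $-M_l$, $(l,j)$-entry $-M_j$, $(l,l)$-entry $M_j$. For $j=1,\dots,n-1$, $\Omega^M_j=\sum_{l=j+1}^n\Omega^M_{jl}$, acting on column vectors $C\in\mathbb{F}_p^n$. (This system describes the possible leading coefficient $C$ and exponents $(d_1,\dots,d_n)$ mod $p$ of the leading term, in lexicographic order $z_1>z_2>\dots>z_n$, of a polynomial solution over $\mathbb{F}_p$ of the KZ system $\partial I/\partial z_i=\frac1q\sum_{j\ne i}\frac{\Omega_{ij}}{z_i-z_j}I$, $\sum m_iI_i=0$.) *)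

(* Defs.v *)
From mathcomp Require Import all_boot all_order all_algebra.
Set Implicit Arguments. Unset Strict Implicit. Unset Printing Implicit Defensive.
Import GRing.Theory.
Local Open Scope ring_scope.

Definition OmegaM_jl (F : ringType) (n : nat) (M : 'I_n -> F) (j l : 'I_n)
  : 'M[F]_n :=
  \matrix_(a, b)
    if (a == j) && (b == j) then M l
    else if (a == j) && (b == l) then - M l
    else if (a == l) && (b == j) then - M j
    else if (a == l) && (b == l) then M j
    else 0.

Definition OmegaM_j (F : ringType) (n : nat) (M : 'I_n -> F) (j : 'I_n)
  : 'M[F]_n :=
  \sum_(l : 'I_n | (j < l)%N) OmegaM_jl M j l.

(* M_i is the least positive integer with M_i = -m_i/q (mod p),
   i.e. M_i * q + m_i = 0 (mod p) (q is invertible mod p since 1 < q < p prime). *)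
Definition is_least_M (p q mi Mi : nat) : Prop :=
  [/\ (0 < Mi)%N, (Mi * q + mi == 0 %[mod p])%N &
      forall k : nat, (0 < k)%N -> (k * q + mi == 0 %[mod p])%N -> (Mi <= k)%N].

(* Main.v *)
Require Import Defs.
From mathcomp Require Import all_boot all_order all_algebra.
From mathcomp Require Import zify ring.
Import GRing.Theory.
Local Open Scope ring_scope.

Lemma Om_jl_mul (F : ringType) n (M : 'I_n -> F) (j l : 'I_n) (C : 'cV[F]_n) a :
  j != l -> (OmegaM_jl M j l *m C) a 0 =
   if a == j then M l * (C j 0 - C l 0)
   else if a == l then M j * (C l 0 - C j 0) else 0.
Proof.
move=> hjl; rewrite mxE (bigD1 j) //= (bigD1 l) /=; last by rewrite eq_sym hjl.
rewrite big1 ?addr0; last first.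
  move=> b /andP[hbl hbj]; rewrite mxE (negbTE hbl) (negbTE hbj) !andbF mul0r //.
rewrite !mxE !eqxx (negbTE hjl) [l == j]eq_sym (negbTE hjl) !andbT !andbF.
case: (eqVneq a j) => [_|haj] /=; first by rewrite mulrBr mulNr.
case: (eqVneq a l) => [_|hal] /=; first by rewrite mulrBr mulNr addrC.
by rewrite !mul0r addr0.
Qed.

Lemma lt_neq {n} {j l : 'I_n} : (j < l)%N -> j != l.
Proof. by move=> h; apply: contraTneq h => ->; rewrite ltnn. Qed.

Lemma Om_j_mul (F : ringType) n (M : 'I_n -> F) (j : 'I_n) (C : 'cV[F]_n) a :
  (OmegaM_j M j *m C) a 0 =
   if a == j then \sum_(l : 'I_n | (j < l)%N) M l * (C j 0 - C l 0)
   else if (j < a)%N then M j * (C a 0 - C j 0) else 0.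
Proof.
rewrite /OmegaM_j mulmx_suml summxE.
case: (eqVneq a j) => [->|haj].
  apply: eq_bigr => l hl; rewrite Om_jl_mul ?eqxx //.
  exact: lt_neq.
case: ifP => hja.
  rewrite (bigD1 a) //= Om_jl_mul ?(negbTE haj) ?eqxx; last exact: lt_neq.
  rewrite big1 ?addr0 // => l /andP[hl hla].
  rewrite Om_jl_mul; last exact: lt_neq.
  by rewrite (negbTE haj) eq_sym (negbTE hla).
rewrite big1 // => l hl; rewrite Om_jl_mul ?(negbTE haj); last exact: lt_neq.
case: (eqVneq a l) => [hal|//]; by rewrite hal hl in hja.
Qed.

Lemma sum_split (F : nmodType) n (f : 'I_n -> F) (i : 'I_n) :
  (forall j : 'I_n, (j < i)%N -> f j = 0) ->
  \sum_(j : 'I_n) f j = f i + \sum_(j : 'I_n | (i < j)%N) f j.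
Proof.
move=> h; rewrite (bigD1 i) //=; congr (_ + _).
rewrite (bigID (fun j : 'I_n => (i < j)%N)) /= [X in _ + X]big1 ?addr0.
  by apply: eq_bigl => j; rewrite andbC; case hij: (i < j)%N => //=; rewrite eq_sym lt_neq.
move=> j /andP[hji]; rewrite -leqNgt leq_eqVlt => /orP[/eqP/ord_inj e|/h //].
by rewrite e eqxx in hji.
Qed.

Lemma sum_ge (F : nmodType) n (f : 'I_n -> F) (i : 'I_n) :
  \sum_(j : 'I_n | (i <= j)%N) f j = f i + \sum_(j : 'I_n | (i < j)%N) f j.
Proof.
rewrite (bigD1 i) //=; congr (_ + _).
apply: eq_bigl => j; case h: (i < j)%N; first by rewrite eq_sym lt_neq // ltnW.
case: (eqVneq j i) => [_|hji] /=; rewrite leq_eqVlt h orbF ?andbF // andbT.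
apply/negbTE/eqP => /ord_inj e.
by rewrite e eqxx in hji.
Qed.

Lemma sum_gt_full (F : nmodType) n (f : 'I_n -> F) (j : 'I_n) :
  (forall l : 'I_n, (l <= j)%N -> f l = 0) ->
  \sum_(l : 'I_n | (j < l)%N) f l = \sum_(l : 'I_n) f l.
Proof.
move=> h; rewrite [RHS](bigID (fun l : 'I_n => (j < l)%N)) /= [X in _ + X]big1 ?addr0 //.
by move=> l; rewrite -leqNgt => /h.
Qed.

Lemma MF_neq0 p q (m M : nat) : prime p -> (q < p)%N -> (0 < m)%N -> (m < q)%N ->
  is_least_M p q m M -> (M%:R : 'F_p) != 0.
Proof.
move=> hp hqp hm0 hmq [_ hmod _].
rewrite -(dvdn_pcharf (pchar_Fp hp)); apply/negP => hd.
have : (p %| M * q + m)%N by rewrite /dvdn; move/eqP: hmod; rewrite mod0n => ->.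
rewrite dvdn_addr ?dvdn_mulr // => /(dvdn_leq hm0) hpm.
by move: (leq_ltn_trans hpm (ltn_trans hmq hqp)); rewrite ltnn.
Qed.

Lemma gt_neq {n} {j l : 'I_n} : (j < l)%N -> l != j.
Proof. by move=> h; rewrite eq_sym lt_neq. Qed.

Lemma neq_nlt {n} {a j : 'I_n} : a != j -> ~~ (j < a)%N -> (a < j)%N.
Proof.
move=> h; rewrite -leqNgt leq_eqVlt => /orP[/eqP/ord_inj e|//].
by rewrite e eqxx in h.
Qed.

Theorem theorem5p3 (p q n : nat) (m M : 'I_n -> nat)
  (hp : prime p) (hq : prime q) (hn : (2 <= n)%N) (hpn : (n < p)%N)
  (hpq : (q < p)%N)
  (hm : forall i, (0 < m i)%N /\ (m i < q)%N)
  (hM : forall i, is_least_M p q (m i) (M i))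
  (C : 'cV['F_p]_n) (d : 'I_n -> 'F_p) (i : 'I_n)
  (hCi : C i 0 != 0) (hCj : forall j : 'I_n, (j < i)%N -> C j 0 = 0) :
  let MF := fun j : 'I_n => ((M j)%:R : 'F_p) in
  let S := \sum_(l : 'I_n | (i < l)%N) MF l in
  ( \sum_(j : 'I_n) MF j * C j 0 = 0
    /\ (forall j : 'I_n, (j < n.-1)%N -> OmegaM_j MF j *m C = d j *: C)
    /\ (forall j : 'I_n, nat_of_ord j = n.-1 -> d j = 0) )
  <->
  ( (forall j : 'I_n, (j < i)%N -> d j = MF j)
    /\ d i = \sum_(j : 'I_n | (i <= j)%N) MF j
    /\ d i != MF i
    /\ (forall j : 'I_n, (i < j)%N -> d j = 0)
    /\ S != 0
    /\ (forall j : 'I_n, (i < j)%N -> C j 0 = - (MF i / S) * C i 0) ).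
Proof.
move=> MF S.
have hMF : forall j, MF j != 0 := fun j => @MF_neq0 p q (m j) (M j) hp hpq (hm j).1 (hm j).2 (hM j).
have hiN := ltn_ord i.
have H0split : \sum_(j : 'I_n) MF j * C j 0 = MF i * C i 0 + \sum_(j : 'I_n | (i < j)%N) MF j * C j 0.
  by apply: sum_split => j hj; rewrite hCj ?mulr0.
split.
- move=> [H0 [HE Hl]].
  have Ea (j a : 'I_n) (hj : (j < n.-1)%N) : (OmegaM_j MF j *m C) a 0 = d j * C a 0.
    by rewrite (HE j hj) mxE.
  have hlt : forall j : 'I_n, (j < i)%N -> d j = MF j.
    move=> j hj; have hjn : (j < n.-1)%N by lia.
    move: (Ea j i hjn); rewrite Om_j_mul (negbTE (gt_neq hj)) hj (hCj j hj) subr0 => e.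
    exact: (mulIf hCi (esym e)).
  have hgt : forall j : 'I_n, (i < j)%N -> d j = 0.
    move=> j hj; case: (ltnP j n.-1) => hjn; last by apply: Hl; move: (ltn_ord j); lia.
    move: (Ea j i hjn); rewrite Om_j_mul (negbTE (lt_neq hj)) ltnNge (ltnW hj) /=.
    by move/esym/eqP; rewrite mulf_eq0 (negbTE hCi) orbF => /eqP.
  have hin : (i < n.-1)%N.
    case: (ltnP i n.-1) => // h; move: H0; rewrite H0split big1 ?addr0.
      by move/eqP; rewrite mulf_eq0 (negbTE hCi) (negbTE (hMF i)).
    by move=> l hl; move: (ltn_ord l); lia.
  have hin1 : (i.+1 < n)%N by lia.
  pose i1 : 'I_n := Ordinal hin1.
  have hi1 : (i < i1)%N by rewrite /= ltnSn.
  have Er (l : 'I_n) (hl : (i < l)%N) : MF i * (C l 0 - C i 0) = d i * C l 0.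
    by move: (Ea i l hin); rewrite Om_j_mul (negbTE (gt_neq hl)) hl.
  have Ei : \sum_(l : 'I_n | (i < l)%N) MF l * (C i 0 - C l 0) = d i * C i 0.
    by move: (Ea i i hin); rewrite Om_j_mul eqxx.
  have hne : d i != MF i.
    apply/eqP => e; move: (Er i1 hi1); rewrite e => h.
    have : MF i * C i 0 = MF i * C i1 0 - MF i * (C i1 0 - C i 0) by ring.
    by rewrite h subrr; apply/eqP; rewrite mulf_neq0 ?hMF.
  have hden : MF i - d i != 0 by rewrite subr_eq0 eq_sym.
  pose k := MF i * C i 0 / (MF i - d i).
  have hcl (l : 'I_n) (hl : (i < l)%N) : C l 0 = k.
    rewrite /k -[LHS](mulfK hden); congr (_ / _).
    apply/eqP; rewrite -subr_eq0; apply/eqP.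
    transitivity (- (d i * C l 0 - MF i * (C l 0 - C i 0))); first by ring.
    by rewrite (Er l hl) subrr oppr0.
  have Ei2 : S * (C i 0 - k) = d i * C i 0.
    rewrite -Ei /S mulr_suml; apply: eq_bigr => l hl; by rewrite (hcl l hl).
  have key : d i * (d i - MF i - S) * C i 0 = 0.
    transitivity (- ((MF i - d i) * (d i * C i 0 - S * (C i 0 - k)))).
      by rewrite /k; field.
    by rewrite Ei2 subrr mulr0 oppr0.
  have hdi : d i = MF i + S.
    move/eqP: key; rewrite mulf_eq0 (negbTE hCi) orbF mulf_eq0 => /orP[/eqP d0|].
      have hk : k = C i 0.
        by rewrite /k d0 subr0; field; exact: hMF.
      move: H0; rewrite H0split (eq_bigr (fun l => MF l * C i 0)); last first.
        by move=> l hl; rewrite (hcl l hl) hk.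
      rewrite -mulr_suml -/S -mulrDl => /eqP; rewrite mulf_eq0 (negbTE hCi) orbF.
      by rewrite d0 => /eqP ->.
    by rewrite subr_eq0 subr_eq addrC => /eqP.
  have hS : S != 0 by apply: contra hne => /eqP S0; rewrite hdi S0 addr0.
  split; first exact: hlt.
  split; first by rewrite sum_ge hdi.
  split; first exact: hne.
  split; first exact: hgt.
  split; first exact: hS.
  move=> j hj; rewrite hcl // /k hdi.
  have -> : MF i - (MF i + S) = - S by ring.
  by field; rewrite oppr_eq0 hS.
- move=> [Hlt [Hdi [Hne [Hgt [HS Hc]]]]].
  have hdi : d i = MF i + S by rewrite Hdi sum_ge.
  have H0 : \sum_(j : 'I_n) MF j * C j 0 = 0.
    rewrite H0split (eq_bigr (fun l => MF l * (- (MF i / S) * C i 0))); last first.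
      by move=> l hl; rewrite Hc.
    rewrite -mulr_suml -/S; by field.
  have hin : (i < n.-1)%N.
    case: (ltnP i n.-1) => // h; move: HS; rewrite /S big1 ?eqxx // => l hl.
    by move: (ltn_ord l); lia.
  split; first exact: H0.
  split; last by move=> j hj; apply: Hgt; lia.
  move=> j hj; apply/matrixP => a b.
  have -> : b = 0 by apply: ord1.
  rewrite Om_j_mul mxE.
  case: (ltngtP j i) => hji.
  + rewrite Hlt //; case: (eqVneq a j) => [->|haj].
      rewrite (hCj j hji) mulr0.
      under eq_bigr do rewrite sub0r mulrN.
      rewrite sumrN sum_gt_full ?H0 ?oppr0 //.
      by move=> l hl; rewrite hCj ?mulr0 // (leq_ltn_trans hl hji).
    case: ifP => hja; first by rewrite (hCj j hji) subr0.
    by rewrite hCj ?mulr0 // (ltn_trans (neq_nlt haj (negbT hja)) hji).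
  + rewrite Hgt // mul0r; case: (eqVneq a j) => [_|haj].
      by rewrite big1 // => l hl; rewrite (Hc j hji) (Hc l (ltn_trans hji hl)) subrr mulr0.
    case: ifP => hja //; by rewrite (Hc j hji) (Hc a (ltn_trans hji hja)) subrr mulr0.
  + have e : j = i by apply: ord_inj.
    subst j; rewrite hdi; case: (eqVneq a i) => [->|hai].
      rewrite (eq_bigr (fun l => MF l * ((1 + MF i / S) * C i 0))); last first.
        by move=> l hl; rewrite (Hc l hl); ring.
      rewrite -mulr_suml -/S; by field.
    case: ifP => hia; first by rewrite (Hc a hia); field.
    by rewrite hCj ?mulr0 // (neq_nlt hai (negbT hia)).
Qed.
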